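(* Let $\mathbb K$ be a field of characteristic $2$ and $D\in\mathbb K[X]$. There exist $p,q\in\mathbb K[X]$ with $q\ne0$ and $\eta\in\mathbb K^*$ such that $p^2-Dq^2=\eta$ if and only if there exist $E\in\mathbb K[X]$ and $r\in\mathbb K$ with $D=E^2+r$. Moreover, one can take $r=0$ (i.e. $D$ is a square in $\mathbb K[X]$) if and only if there is such a solution with $\eta$ a square in $\mathbb K$. *)

(* Defs.v *)
From HB Require Import structures.
From mathcomp Require Export all_boot all_order all_algebra.
Set Implicit Arguments. Unset Strict Implicit. Unset Printing Implicit Defensive.

(* Main.v *)
Require Import Defs.
From mathcomp Require Import all_boot all_order all_algebra.
From mathcomp Require Import zify.
Import GRing.Theory.
Local Open Scope ring_scope.

Section Aux.
Variable K : fieldType.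
Hypothesis hK : 2%N \in [pchar K].

Lemma two0 (x : {poly K}) : x *+ 2 = 0.
Proof.
by rewrite -mulr_natr -polyC_natr (pcharf0 hK) mulr0.
Qed.

Lemma oppX (x : {poly K}) : - x = x.
Proof.
by apply/eqP; rewrite eq_sym -addr_eq0 -mulr2n two0.
Qed.

Lemma sqrD (a b : {poly K}) : (a + b) ^+ 2 = a ^+ 2 + b ^+ 2.
Proof. by rewrite sqrrD two0 addr0. Qed.

Lemma key (D p q : {poly K}) (eta : K) : q != 0 ->
  p ^+ 2 - D * q ^+ 2 = eta%:P ->
  (exists s, D = s ^+ 2) \/ (exists c, c != 0 /\ q = c%:P).
Proof.
move=> q0 h.
case: (leqP (size q) 1) => hq.
  right; exists q`_0; have qc := size1_polyC hq.
  split=> //; apply: contraNneq q0 => c0; by rewrite qc c0.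
left; exists (p %/ q).
set s := p %/ q; set t := p %% q.
have e : (D - s ^+ 2) * q ^+ 2 = t ^+ 2 - eta%:P.
  have hp : p = s * q + t by rewrite /s /t -divp_eq.
  have : eta%:P = (s * q) ^+ 2 + t ^+ 2 - D * q ^+ 2 by rewrite -h hp sqrD.
  move=> ->; rewrite exprMn mulrBl.
  rewrite !opprB !opprD !oppX. 
  by rewrite [RHS]addrC -!addrA -mulr2n two0 addr0.
apply/eqP; rewrite -subr_eq0; apply/negPn/negP => nz.
have ht : (size t < size q)%N by rewrite ltn_modp.
have sq2 : size (q ^+ 2) = (2 * size q).-1.
  have := size_exp q 2; have : size (q ^+ 2) != 0%N.
    by rewrite size_poly_eq0 expf_neq0.
  move: (size (q ^+ 2)) (size q) hq => [|a] [|b] //= _ _ ->; lia.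
have s1 : (size (q ^+ 2) <= size ((D - s ^+ 2) * q ^+ 2)%R)%N.
  rewrite [size ((D - _) * _)]size_mul ?expf_neq0 // -subn1.
  have : size (D - s ^+ 2) != 0%N by rewrite size_poly_eq0.
  move: (size (D - _)) (size (q ^+ 2)) => a b; lia.
have s2 : (size (t ^+ 2 - eta%:P)%R <= maxn (size (t ^+ 2)) 1)%N.
  apply: leq_trans (size_add _ _) _.
  by rewrite size_opp geq_max leq_maxl /= leq_max size_polyC_leq1 orbT.
have s3 : (size (t ^+ 2) <= (size t + size t).-1)%N by rewrite expr2 size_mul_leq.
rewrite e in s1.
move: s1 s2 s3 sq2 ht hq; move: (size (t ^+ 2 - _)) (size (t ^+ 2)) (size (q ^+ 2)) (size t) (size q) => a b c d f; rewrite -!subn1; lia.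
Qed.

End Aux.
Arguments key {K} hK {D p q eta}.
Arguments sqrD {K} hK.
Arguments oppX {K} hK.

Theorem mainTheorem18 (K : fieldType) (hK : 2%N \in [pchar K]) (D : {poly K}) :
  ((exists (p q : {poly K}) (eta : K),
       [/\ q != 0, eta != 0 & p ^+ 2 - D * q ^+ 2 = eta%:P])
   <-> (exists (E : {poly K}) (r : K), D = E ^+ 2 + r%:P))
  /\
  ((exists E : {poly K}, D = E ^+ 2)
   <-> (exists (p q : {poly K}) (eta : K),
       [/\ q != 0, eta != 0, p ^+ 2 - D * q ^+ 2 = eta%:P
         & exists s : K, eta = s ^+ 2])).
Proof.
have sol0 : forall E : {poly K}, D = E ^+ 2 ->
    (E + 1) ^+ 2 - D * 1 ^+ 2 = 1%:P.
  move=> E ->; by rewrite expr1n mulr1 sqrD // expr1n addrAC subrr add0r.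
split; split.
- case=> p [q [eta [q0 eta0 h]]].
  case: (key hK q0 h) => [[s ->]|[c [c0 qc]]].
    by exists s, 0; rewrite addr0.
  exists (p * (c^-1)%:P), (- (eta / c ^+ 2)).
  move: h; rewrite qc => h.
  have c2 : c ^+ 2 != 0 by rewrite expf_neq0.
  apply: (@mulIf _ ((c ^+ 2)%:P)); first by rewrite polyC_eq0.
  rewrite mulrDl exprMn -mulrA -!polyC_exp -!polyCM exprVn mulVf // mulr1 mulNr divfK // polyCN.
  by rewrite polyC_exp -h opprB addrC subrK.
- case=> E [r hD].
  have [r0|r0] := eqVneq r 0.
    exists (E + 1), 1, 1; split=> //; first exact: oner_neq0.
      exact: oner_neq0.
    by apply: sol0; rewrite hD r0 addr0.
  exists E, 1, (- r); split; rewrite ?oppr_eq0 ?oner_neq0 //.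
  by rewrite hD expr1n mulr1 opprD addrA subrr add0r polyCN.
- case=> E hE; exists (E + 1), 1, 1; split; rewrite ?oner_neq0 //.
    exact: sol0.
  by exists 1; rewrite expr1n.
- case=> p [q [eta [q0 eta0 h [s es]]]].
  case: (key hK q0 h) => [//|[c [c0 qc]]].
  exists ((p - s%:P) * (c^-1)%:P).
  move: h; rewrite qc es => h.
  apply: (@mulIf _ ((c ^+ 2)%:P)); first by rewrite polyC_eq0 expf_neq0.
  rewrite exprMn -polyC_exp -mulrA -polyCM exprVn mulVr ?unitfE ?expf_neq0 // mulr1.
  have : D * c%:P ^+ 2 = p ^+ 2 - (s ^+ 2)%:P.
    by rewrite -h opprB addrC subrK.
  rewrite -polyC_exp => ->.
  by rewrite !(oppX hK) (sqrD hK) polyC_exp.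
Qed.
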